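(* Let $\mathcal{I}$ be an inclusion-wise minimal unsatisfiable instance of $\mathrm{CSP}(\mathcal{A})$, i.e., $\mathcal{I}$ is unsatisfiable but removing any single constraint yields a satisfiable instance. Then the primal graph of $\mathcal{I}$ is a cycle.
   Context: Allen's interval algebra has domain $\mathbb{I}=\{[a,b] : a,b\in\mathbb{Q},\ a<b\}$; for $I=[a,b]$ write $I^-=a$, $I^+=b$. Basic relations: $x\,\mathsf{p}\,y$ iff $x^+<y^-$; $x\,\mathsf{m}\,y$ iff $x^+=y^-$; $x\,\mathsf{o}\,y$ iff $x^-<y^-<x^+<y^+$; $x\,\mathsf{d}\,y$ iff $y^-<x^-$ and $x^+<y^+$; $x\,\mathsf{s}\,y$ iff $x^-=y^-$ and $x^+<y^+$; $x\,\mathsf{f}\,y$ iff $x^+=y^+$ and $y^-<x^-$; $x\equiv y$ iff $x=y$; inverses $\mathsf{ri}$ with $x\,\mathsf{ri}\,y$ iff $y\,\mathsf{r}\,x$; $\mathcal{A}$ is the set of these 13 relations. An instance of $\mathrm{CSP}(\mathcal{A})$ consists of variables and binary constraints $x\,R\,y$ with $R\in\mathcal{A}$; it is satisfiable if an assignment of intervals satisfies all constraints. The primal graph of an instance is the undirected multigraph whose vertices are the variables and which has one edge $\{x,y\}$ for each constraint $x\,R\,y$; loops and parallel edges are allowed, and a single loop or a pair of parallel edges counts as a cycle. *)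

(* Defs.v *)
From HB Require Import structures.
From Stdlib Require List.
From mathcomp Require Import all_boot all_order all_algebra.
Set Implicit Arguments. Unset Strict Implicit. Unset Printing Implicit Defensive.
Import Order.TTheory GRing.Theory Num.Theory.
Local Open Scope ring_scope.

Definition interval := (rat * rat)%type.
Definition is_interval (I : interval) : bool := I.1 < I.2.

(* The 13 basic relations of Allen's interval algebra. *)
Inductive basic_rel : Type :=
| Rp | Rm | Ro | Rd | Rs | Rf | Req | Rpi | Rmi | Roi | Rdi | Rsi | Rfi.

Definition holds0 (r : basic_rel) (x y : interval) : bool :=
  match r with
  | Rp => x.2 < y.1
  | Rm => x.2 == y.1
  | Ro => [&& x.1 < y.1, y.1 < x.2 & x.2 < y.2]
  | Rd => (y.1 < x.1) && (x.2 < y.2)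
  | Rs => (x.1 == y.1) && (x.2 < y.2)
  | Rf => (x.2 == y.2) && (y.1 < x.1)
  | Req => x == y
  | Rpi => y.2 < x.1
  | Rmi => y.2 == x.1
  | Roi => [&& y.1 < x.1, x.1 < y.2 & y.2 < x.2]
  | Rdi => (x.1 < y.1) && (y.2 < x.2)
  | Rsi => (y.1 == x.1) && (y.2 < x.2)
  | Rfi => (y.2 == x.2) && (x.1 < y.1)
  end.

(* Variables are natural numbers; a constraint x R y is a triple (x, R, y).
   An instance is a finite list (multiset) of constraints; its variables are
   those occurring in its constraints. *)
Definition constraint := (nat * basic_rel * nat)%type.
Definition instance := seq constraint.

Definition satisfiable (I : instance) : Prop :=
  exists a : nat -> interval,
    (forall v, is_interval (a v)) /\
    (forall c, Stdlib.Lists.List.In c I -> holds0 c.1.2 (a c.1.1) (a c.2)).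

Definition remove_nth (I : instance) (i : nat) : instance :=
  take i I ++ drop i.+1 I.

Definition minimal_unsat (I : instance) : Prop :=
  ~ satisfiable I /\ (forall i, (i < size I)%N -> satisfiable (remove_nth I i)).

(* Primal multigraph: one undirected edge per constraint, stored normalized. *)
Definition uedge (x y : nat) : nat * nat := (minn x y, maxn x y).
Definition primal_edges (I : instance) : seq (nat * nat) :=
  [seq uedge c.1.1 c.2 | c <- I].

(* A multigraph (vertex set = endpoints of its edges) is a cycle iff there is
   a nonempty duplicate-free sequence of vertices v_0 ... v_{k-1} such that the
   edge multiset is exactly {v_i, v_{i+1 mod k}}.  k = 1 gives a single loop,
   k = 2 a pair of parallel edges. *)
Definition is_cycle (E : seq (nat * nat)) : Prop :=
  exists vs : seq nat, [/\ (0 < size vs)%N, uniq vs &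
    perm_eq E [seq uedge p.1 p.2 | p <- zip vs (rot 1 vs)]].

(* Main.v *)
From HB Require Import structures.
Require Import Defs.
From mathcomp Require Import all_boot all_order all_algebra.
From mathcomp Require Import lra zify.
From Stdlib Require Import ClassicalEpsilon Classical.
Import Order.TTheory GRing.Theory Num.Theory.
Set Implicit Arguments. Unset Strict Implicit.

Definition br_enc (r : basic_rel) : nat :=
  match r with Rp => 0 | Rm => 1 | Ro => 2 | Rd => 3 | Rs => 4 | Rf => 5 | Req => 6
  | Rpi => 7 | Rmi => 8 | Roi => 9 | Rdi => 10 | Rsi => 11 | Rfi => 12 end%N.
Lemma br_eqP : Equality.axiom (fun a b => br_enc a == br_enc b).
Proof. by move=> a b; case: a; case: b; constructor. Qed.
HB.instance Definition _ := hasDecEq.Build basic_rel br_eqP.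

Module MA.
Local Open Scope ring_scope.
Definition model (R : basic_rel) : (nat * nat) * (nat * nat) :=
  match R with
  | Rp => ((0,1),(2,3))%N | Rm => ((0,1),(1,2))%N | Ro => ((0,2),(1,3))%N
  | Rd => ((1,2),(0,3))%N | Rs => ((0,1),(0,2))%N | Rf => ((1,2),(0,2))%N
  | Req => ((0,1),(0,1))%N | Rpi => ((2,3),(0,1))%N | Rmi => ((1,2),(0,1))%N
  | Roi => ((1,3),(0,2))%N | Rdi => ((0,3),(1,2))%N | Rsi => ((0,2),(0,1))%N
  | Rfi => ((0,2),(1,2))%N end.

Definition mval (R : basic_rel) (s b : bool) : nat :=
  let I := if s then (model R).2 else (model R).1 in if b then I.2 else I.1.

Definition pt (u1 u2 w1 w2 : rat) (s b : bool) : rat :=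
  if s then (if b then w2 else w1) else (if b then u2 else u1).

Lemma mval_lt R s : (mval R s false < mval R s true)%N.
Proof. by case: R; case: s. Qed.

Ltac brk := repeat match goal with
  | H : is_true (_ && _) |- _ => case/andP: H
  | H : is_true (_ == _) |- _ => move/eqP: H
  | |- is_true (_ && _) -> _ => case/andP
  | |- is_true (_ == _) -> _ => move/eqP
  | |- _ -> _ => intro
  end.

Lemma sound_rel R (u1 u2 w1 w2 : rat) :
  holds0 R (u1,u2) (w1,w2) -> u1 < u2 -> w1 < w2 ->
  forall s b s' b',
   ((mval R s b <= mval R s' b')%N -> pt u1 u2 w1 w2 s b <= pt u1 u2 w1 w2 s' b') /\
   ((mval R s b < mval R s' b')%N -> pt u1 u2 w1 w2 s b < pt u1 u2 w1 w2 s' b').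
Proof.
case: R => /=; rewrite ?xpair_eqE /= => H hu hw s b s' b'; move: H; brk;
  case: s; case: b; case: s'; case: b'; rewrite /mval /pt /=;
  split => // _; lra.
Qed.

Lemma fstE (A B : Type) (a : A) (b : B) : (a, b).1 = a. Proof. by []. Qed.
Lemma sndE (A B : Type) (a : A) (b : B) : (a, b).2 = b. Proof. by []. Qed.

Ltac inst H s b s' b' := let h := fresh in have h := H s b s' b'; simpl in h;
   first [specialize (h isT) | clear h].

Lemma complete_rel R (u1 u2 w1 w2 : rat) :
  (forall s b s' b', (mval R s b <= mval R s' b')%N -> pt u1 u2 w1 w2 s b <= pt u1 u2 w1 w2 s' b') ->
  (forall s b s' b', (mval R s b < mval R s' b')%N -> pt u1 u2 w1 w2 s b < pt u1 u2 w1 w2 s' b') ->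
  holds0 R (u1,u2) (w1,w2).
Proof.
case: R => H1 H2;
inst H1 false false false true; inst H1 false false true false; inst H1 false false true true;
inst H1 false true false false; inst H1 false true true false; inst H1 false true true true;
inst H1 true false false false; inst H1 true false false true; inst H1 true false true true;
inst H1 true true false false; inst H1 true true false true; inst H1 true true true false;
inst H2 false false false true; inst H2 false false true false; inst H2 false false true true;
inst H2 false true false false; inst H2 false true true false; inst H2 false true true true;
inst H2 true false false false; inst H2 true false false true; inst H2 true false true true;
inst H2 true true false false; inst H2 true true false true; inst H2 true true true false;
clear H1 H2; rewrite /holds0 ?fstE ?sndE;
 try match goal with |- is_true ((_,_) == (_,_)) => apply/eqP; congr (_,_) end;
 repeat match goal with |- is_true (_ && _) => apply/andP; split end; try match goal with |- is_true (_ == _) => apply/eqP end; lra.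
Qed.

End MA.
Import MA.

Module MC.
Local Open Scope ring_scope.

Definition point := (nat * bool)%type.
Definition c0 : constraint := (0%N, Req, 0%N).
Definition inc (c : constraint) (p : point) := (p.1 == c.1.1) || (p.1 == c.2).
Definition cval (c : constraint) (p : point) := mval c.1.2 (p.1 != c.1.1) p.2.
Definition G (a : nat -> Defs.interval) (p : point) : rat := if p.2 then (a p.1).2 else (a p.1).1.

Lemma holds_loop R (u : Defs.interval) : holds0 R u u -> is_interval u -> R = Req.
Proof.
case: u => u1 u2; rewrite /is_interval /=.
case: R => //= H hu; exfalso; move: H; brk; lra.
Qed.

Lemma Gpt a x R y p : inc (x,R,y) p ->
  G a p = pt (a x).1 (a x).2 (a y).1 (a y).2 (p.1 != x) p.2.
Proof.
case: p => v b; rewrite /inc /G /pt /=.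
case: (eqVneq v x) => [->|nvx] /=; first by [].
by move/eqP->.
Qed.

Lemma sound_c (c : constraint) a p q :
  is_interval (a c.1.1) -> is_interval (a c.2) -> holds0 c.1.2 (a c.1.1) (a c.2) ->
  inc c p -> inc c q ->
  ((cval c p <= cval c q)%N -> G a p <= G a q) /\ ((cval c p < cval c q)%N -> G a p < G a q).
Proof.
case: c => [[x R] y] /= hx hy hh ip iq.
case: (eqVneq x y) => [exy|nxy].
  subst y. have eR := holds_loop hh hx. subst R.
  move: ip iq; rewrite /inc /cval /G /= !orbb.
  case: p => v b; case: q => w b' /= /eqP -> /eqP ->; rewrite eqxx /=.
  move: hx; rewrite /is_interval.
  by case: b; case: b'; rewrite /mval /=; split => // _; lra.
rewrite (Gpt a ip) (Gpt a iq) /cval /=.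
have := @sound_rel R (a x).1 (a x).2 (a y).1 (a y).2.
rewrite -!surjective_pairing; move=> /(_ hh hx hy) H; exact: H.
Qed.

Lemma val_lt c v : (cval c (v, false) < cval c (v, true))%N.
Proof. exact: mval_lt. Qed.

Definition cst (I : instance) k := nth c0 I k.
Definition ok (I : instance) k p q :=
  [&& (k < size I)%N, inc (cst I k) p, inc (cst I k) q & (cval (cst I k) p <= cval (cst I k) q)%N].
Definition strict (I : instance) k p q := (cval (cst I k) p < cval (cst I k) q)%N.
Definition walk I n (k : nat -> nat) (pts : nat -> point) :=
  forall s, (s < n)%N -> ok I (k s) (pts s) (pts s.+1).
Definition swalk I n k pts :=
  walk I n k pts /\ exists2 s, (s < n)%N & strict I (k s) (pts s) (pts s.+1).
Definition scyc I n k pts := swalk I n k pts /\ pts n = pts 0%N.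

Lemma sound_walk I a n k pts :
  (forall v, is_interval (a v)) ->
  (forall s, (s < n)%N -> holds0 (cst I (k s)).1.2 (a (cst I (k s)).1.1) (a (cst I (k s)).2)) ->
  swalk I n k pts -> G a (pts 0%N) < G a (pts n).
Proof.
move=> hi hh [hw [s0 hs0 hst]].
have key : forall m, (m <= n)%N -> G a (pts 0%N) <= G a (pts m) /\
    ((s0 < m)%N -> G a (pts 0%N) < G a (pts m)).
  elim=> [|m IH] hm; first by split=> //.
  have hmn : (m < n)%N by [].
  case: IH; first exact: ltnW.
  move=> IH1 IH2.
  move: (hw m hmn); case/and4P=> _ ip iq hv.
  have [S1 S2] := sound_c (hi _) (hi _) (hh m hmn) ip iq.
  have l1 := S1 hv.
  split; first exact: le_trans l1.
  rewrite ltnS leq_eqVlt; case/orP => [/eqP e|lt]; last exact: lt_le_trans (IH2 lt) l1.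
  subst s0. exact: le_lt_trans IH1 (S2 hst).
by case: (key n (leqnn n)) => _; apply.
Qed.

End MC.
Import MC.

Module MD.

Lemma replace_start I kk (p p' q : point) : ok I kk p q -> p'.1 = p.1 -> (p'.2 ==> p.2) ->
  ok I kk p' q /\ ((strict I kk p q \/ p' != p) -> strict I kk p' q).
Proof.
case: p => v b; case: p' => v' b' /= hok ev; subst v'.
move: hok; rewrite /ok /strict; case/and4P => hk ip iq hv.
have lt := val_lt (cst I kk) v.
case: b ip hv; case: b' => //= ip hv _.
- by rewrite hk ip iq hv; split=> // -[] //; rewrite eqxx.
- have ip' : inc (cst I kk) (v, false) by move: ip; rewrite /inc.
  rewrite hk ip' iq /=; split; first exact: leq_trans (ltnW lt) hv.
  move=> _; exact: leq_trans lt hv.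
- by rewrite hk ip iq hv; split=> // -[] //; rewrite eqxx.
Qed.

Lemma cycA I n k pts i j : walk I n k pts -> (i < j)%N -> (j <= n)%N ->
  (pts j).1 = (pts i).1 -> ((pts j).2 ==> (pts i).2) ->
  ((exists2 s, (i <= s < j)%N & strict I (k s) (pts s) (pts s.+1)) \/ pts j != pts i) ->
  scyc I (j - i) (fun t => k (i + t)) (fun t => if t == 0%N then pts j else pts (i + t)).
Proof.
move=> hw hij hjn e1 e2 hs.
have hi : (i < n)%N by lia.
have [R1 R2] := replace_start (hw i hi) e1 e2.
split; [split|].
- move=> s hs'; case: (eqVneq s 0%N) => [->|s0] /=.
    by rewrite /= ?addn0 ?addn1.
  by rewrite addnS; apply: hw; lia.
- case: hs => [[s0 hs0 hst]|hne].
    case: (eqVneq s0 i) => [es|ns].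
      subst s0; exists 0%N; first lia.
      by rewrite /= ?addn0 ?addn1; apply: R2; left.
    exists (s0 - i)%N; first lia.
    have -> : (s0 - i == 0)%N = false by lia.
    by rewrite /= addnS; have -> : (i + (s0 - i) = s0)%N by lia.
  exists 0%N; first lia.
  by rewrite /= ?addn0 ?addn1; apply: R2; right.
- have -> : (j - i == 0)%N = false by lia.
  by rewrite /=; congr pts; lia.
Qed.

Lemma cycB I n k pts i j : walk I n k pts -> pts n = pts 0%N -> (i < j)%N -> (j < n)%N ->
  (pts i).1 = (pts j).1 -> ((pts i).2 ==> (pts j).2) ->
  ((exists2 s, (s < i)%N || (j <= s < n)%N & strict I (k s) (pts s) (pts s.+1)) \/ pts i != pts j) ->
  scyc I (n - j + i) (fun t => if (t < n - j)%N then k (j + t) else k (t - (n - j)))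
   (fun t => if t == 0%N then pts i else if (t <= n - j)%N then pts (j + t) else pts (t - (n - j))).
Proof.
move=> hw hcl hij hjn e1 e2 hs.
have [R1 R2] := replace_start (hw j hjn) e1 e2.
set P := fun t => if t == 0%N then pts i else if (t <= n - j)%N then pts (j + t) else pts (t - (n - j)).
have PL : forall t, (0 < t)%N -> (t < n - j)%N -> P t = pts (j + t).
  move=> t h1 h2; rewrite /P; have -> : (t == 0)%N = false by lia.
  by have -> : (t <= n - j)%N by lia.
have PL' : forall t, (0 < t)%N -> (t <= n - j)%N -> P t = pts (j + t).
  move=> t h1 h2; rewrite /P; have -> : (t == 0)%N = false by lia.
  by rewrite h2.
have PH : forall t, (0 < t)%N -> (n - j <= t)%N -> P t = pts (t - (n - j)).
  move=> t h1 h2; rewrite /P; have -> : (t == 0)%N = false by lia.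
  case: (leqP t (n - j)) => h3; last by [].
  have -> : (j + t = n)%N by lia.
  by rewrite hcl; congr pts; lia.
have P1 : P 1%N = pts j.+1 by rewrite PL' ?addn1 //; lia.
split; [split|].
- move=> s hs'; rewrite -/P.
  case: (eqVneq s 0%N) => [->|s0].
    have -> : (0 < n - j)%N by lia.
    by rewrite P1 addn0 /P /=.
  case: (ltnP s (n - j)) => h.
    by rewrite PL ?PL' ?addnS; [apply: hw| | | |]; lia.
  rewrite !PH; [|lia|lia|lia|lia].
  have -> : (s.+1 - (n - j) = (s - (n - j)).+1)%N by lia.
  apply: hw; lia.
- case: hs => [[s0 hs0 hst]|hne].
    case/orP: hs0 => hs0.
      exists (s0 + (n - j))%N; first lia.
      rewrite -/P.
      have -> : (s0 + (n - j) < n - j)%N = false by lia.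
      rewrite !PH; [|lia|lia|lia|lia].
      have -> : (s0 + (n - j) - (n - j) = s0)%N by lia.
      by have -> : ((s0 + (n - j)).+1 - (n - j) = s0.+1)%N by lia.
    case: (eqVneq s0 j) => [es|ns].
      subst s0; exists 0%N; first lia.
      rewrite -/P P1; have -> : (0 < n - j)%N by lia.
      by rewrite addn0 /P /=; apply: R2; left.
    exists (s0 - j)%N; first lia.
    rewrite -/P; have -> : (s0 - j < n - j)%N by lia.
    rewrite PL ?PL'; [|lia|lia|lia|lia].
    have -> : (j + (s0 - j) = s0)%N by lia.
    by have -> : (j + (s0 - j).+1 = s0.+1)%N by lia.
  exists 0%N; first lia.
  rewrite -/P P1; have -> : (0 < n - j)%N by lia.
  by rewrite addn0 /P /=; apply: R2; right.
- rewrite -/P; case: (eqVneq i 0%N) => [i0|i0].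
    subst i; rewrite PL' ?addn0; [|lia|lia].
    by have -> : (j + (n - j) = n)%N by lia.
  rewrite PH; [|lia|lia]. by congr pts; lia.
Qed.

End MD.
Import MD.

Module ME.

Lemma shorten I n k pts i j : scyc I n k pts -> (i < j)%N -> (j < n)%N ->
  (pts i).1 = (pts j).1 -> exists n' k' pts', (n' < n)%N /\ scyc I n' k' pts'.
Proof.
move=> [[hw [s0 hs0 hst]] hcl] hij hjn e.
have hjn' : (j <= n)%N by lia.
case: (boolP ((pts j).2 ==> (pts i).2)) => h1; case: (boolP ((pts i).2 ==> (pts j).2)) => h2.
- have epts : pts i = pts j.
    move: e h1 h2; case: (pts i) => a b; case: (pts j) => a' b' /= ->.
    by case: b; case: b'.
  case: (boolP (i <= s0 < j)%N) => hs.
    exists (j - i)%N, (fun t => k (i + t)), (fun t => if t == 0%N then pts j else pts (i + t)).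
    split; first lia.
    apply: (cycA hw hij hjn' (esym e) h1).
    by left; exists s0.
  eexists _, _, _; split; last first.
    apply: (cycB hw hcl hij hjn e h2); left; exists s0 => //; lia.
  lia.
- have hne : pts j != pts i.
    apply/negP => /eqP ee; move: h2; by rewrite ee implybb.
  exists (j - i)%N, (fun t => k (i + t)), (fun t => if t == 0%N then pts j else pts (i + t)).
  split; first lia.
  apply: (cycA hw hij hjn' (esym e) h1).
  by right.
- have hne : pts i != pts j.
    apply/negP => /eqP ee; move: h1; by rewrite ee implybb.
  eexists _, _, _; split; last first.
    apply: (cycB hw hcl hij hjn e h2); right => //.
  lia.
- move: h1 h2; by case: (pts i).2; case: (pts j).2.
Qed.

Lemma distinct_cyc I n k pts : scyc I n k pts -> exists n' k' pts', scyc I n' k' pts' /\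
  (forall i j, (i < j)%N -> (j < n')%N -> (pts' i).1 != (pts' j).1).
Proof.
elim: n {-2}n (leqnn n) k pts => [|m IH] n hn k pts hc.
  exists n, k, pts; split => // i j hij hj; lia.
case: (classic (exists i j, [/\ (i < j)%N, (j < n)%N & (pts i).1 = (pts j).1])).
  case=> i [j [hij hjn e]].
  have [n' [k' [pts' [hn' hc']]]] := shorten hc hij hjn e.
  apply: (IH n' _ k' pts' hc'); lia.
move=> hno; exists n, k, pts; split => // i j hij hjn.
apply/negP => /eqP e; apply: hno; by exists i, j.
Qed.

Lemma uedgeC a b : uedge a b = uedge b a.
Proof. by rewrite /uedge minnC maxnC. Qed.

Lemma uedge_inc (a b x y : nat) : (a == x) || (a == y) -> (b == x) || (b == y) -> a != b ->
  uedge a b = uedge x y.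
Proof.
move=> /orP[]/eqP-> /orP[]/eqP-> h //; try by rewrite eqxx in h.
exact: uedgeC.
Qed.

Lemma three_in (z a b x y : nat) : (a == x) || (a == y) -> (b == x) || (b == y) ->
  (z == x) || (z == y) -> a != b -> z != a -> z = b.
Proof.
move=> /orP[]/eqP-> /orP[]/eqP-> /orP[]/eqP-> h1 h2 //; by rewrite eqxx in h1 h2.
Qed.

Lemma cyc_struct I n k pts : scyc I n k pts ->
  (forall i j, (i < j)%N -> (j < n)%N -> (pts i).1 != (pts j).1) ->
  [/\ (1 < n)%N,
      forall t, (t < n)%N -> uedge (pts t).1 (pts t.+1).1 = uedge (cst I (k t)).1.1 (cst I (k t)).2,
      forall s t, (s < t)%N -> (t < n)%N -> k s != k t &
      forall t, (t < n)%N -> (k t < size I)%N].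
Proof.
move=> [[hw [s0 hs0 hst]] hcl] hd.
have D : forall i j, (i < n)%N -> (j < n)%N -> (pts i).1 = (pts j).1 -> i = j.
  move=> i j hi hj e; case: (ltngtP i j) => // h.
    by move: (hd i j h hj); rewrite e eqxx.
  by move: (hd j i h hi); rewrite e eqxx.
have n2 : (1 < n)%N.
  case: n hw hs0 hst hcl D hd => [|[|n]] hw hs0 hst hcl D hd //.
  have s00 : s0 = 0%N by lia.
  subst s0; move: hst; rewrite /strict hcl; lia.
have Dn : forall t, (t < n)%N -> (pts t).1 != (pts t.+1).1.
  move=> t ht; apply/negP => /eqP e.
  case: (ltnP t.+1 n) => h.
    have := D _ _ ht h e; lia.
  have etn : t.+1 = n by lia.
  rewrite etn hcl in e.
  have := D _ _ ht (ltn_trans (ltnSn 0) n2) e; lia.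
split => //.
- move=> t ht; move: (hw t ht); case/and4P => _ ip iq _.
  exact: uedge_inc ip iq (Dn t ht).
- move=> s t hst' htn; apply/negP => /eqP eks.
  have hsn : (s < n)%N by lia.
  move: (hw s hsn) (hw t htn); rewrite eks; case/and4P => hk ip iq hv; case/and4P => _ ip2 iq2 hv2.
  have h1 : (pts s).1 != (pts s.+1).1 := Dn s hsn.
  have h2 : (pts t).1 != (pts s).1.
    apply/negP => /eqP e; have := D _ _ htn hsn e; lia.
  have e3 := three_in ip iq ip2 h1 h2.
  have ets : t = s.+1 by apply: D => //; lia.
  subst t.
  case: (ltnP s.+2 n) => h.
    have h4 : (pts s.+2).1 != (pts s).1.
      apply/negP => /eqP e; have := D _ _ h hsn e; lia.
    have e5 := three_in ip iq iq2 h1 h4.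
    by move: (Dn _ htn); rewrite e5 eqxx.
  have en : s.+2 = n by lia.
  rewrite en hcl in iq2 hv2.
  have h4 : (pts 0%N).1 != (pts s.+1).1.
    apply/negP => /eqP e; have := D _ _ (ltn_trans (ltnSn 0) n2) htn e; lia.
  have e5 : (pts 0%N).1 = (pts s).1.
    apply: (three_in iq ip iq2); [by rewrite eq_sym | exact: h4].
  have s0e : s = 0%N by apply: D => //; lia.
  subst s.
  have n2e : n = 2%N by lia.
  subst n.
  have : s0 = 0%N \/ s0 = 1%N by lia.
  move: hst; rewrite /strict.
  by move=> hst [e|e]; subst s0; move: hst; rewrite /strict ?eks ?hcl /=; lia.
- by move=> t ht; case/and4P: (hw t ht).
Qed.

End ME.
Import ME.

Module MF.

Definition below I (r q : point) := exists n k pts, swalk I n k pts /\ pts 0%N = r /\ pts n = q.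
Definition dec (P : Prop) : bool := if excluded_middle_informative P then true else false.
Lemma decP P : dec P <-> P.
Proof. by rewrite /dec; case: excluded_middle_informative. Qed.

Definition ptsI (I : instance) : seq point :=
  flatten [seq [:: (c.1.1, false); (c.1.1, true); (c.2, false); (c.2, true)] | c <- I].
Definition fcnt I q := count (fun r => dec (below I r q)) (ptsI I).

Lemma inc_ptsI I kk p : (kk < size I)%N -> inc (cst I kk) p -> p \in ptsI I.
Proof.
move=> hk ip; apply/flattenP.
exists [:: ((cst I kk).1.1, false); ((cst I kk).1.1, true); ((cst I kk).2, false); ((cst I kk).2, true)].
  by apply/mapP; exists (cst I kk) => //; apply: mem_nth.
case: p ip => v b; rewrite /inc /= => /orP[]/eqP ->; case: b; rewrite !inE ?eqxx ?orbT //.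
Qed.

Lemma mem_ptsI I p : p \in ptsI I -> exists2 kk, (kk < size I)%N & forall b, inc (cst I kk) (p.1, b).
Proof.
case/flattenP => l /mapP [c hc ->] hp.
exists (index c I); first by rewrite index_mem.
move=> b; rewrite /cst nth_index // /inc /=.
by move: hp; rewrite !inE => /or4P [] /eqP -> /=; rewrite eqxx ?orbT.
Qed.

Lemma below_step I r p kk q : below I r p -> ok I kk p q -> below I r q.
Proof.
case=> n [k [pts [[hw [s0 hs0 hst]] [h0 hn]]]] hok.
exists n.+1, (fun t => if (t < n)%N then k t else kk), (fun t => if (t <= n)%N then pts t else q).
split; [split|split].
- move=> s hs; case: (ltnP s n) => h.
    by rewrite (ltnW h); apply: hw.
  have -> : s = n by lia.
  by rewrite leqnn hn.
- exists s0; first lia.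
  by rewrite hs0 (ltnW hs0).
- by [].
- by rewrite ltnn.
Qed.

Lemma below_one I kk p q : ok I kk p q -> strict I kk p q -> below I p q.
Proof.
move=> hok hst.
exists 1%N, (fun _ => kk), (fun t => if t == 0%N then p else q).
split; [split|split] => //.
- by move=> s; case: s.
- by exists 0%N.
Qed.

Lemma no_self I p : ~ (exists n k pts, scyc I n k pts) -> ~ below I p p.
Proof.
move=> hno [n [k [pts [hs [h0 hn]]]]]; apply: hno; exists n, k, pts; split => //.
by rewrite h0 hn.
Qed.

Lemma count_lt (T : eqType) (a1 a2 : pred T) (s : seq T) x :
  (forall y, a1 y -> a2 y) -> x \in s -> a2 x -> ~~ a1 x -> (count a1 s < count a2 s)%N.
Proof.
move=> hsub; elim: s => [|y s IH] //= hx h2 h1.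
have hle : (count a1 s <= count a2 s)%N by apply: sub_count.
case/orP: hx => [/eqP e|hx].
  subst y; rewrite (negbTE h1) h2 /=; lia.
have := IH hx h2 h1.
case: (boolP (a1 y)) => ha; first by rewrite (hsub _ ha) /=; lia.
case: (a2 y) => /=; lia.
Qed.

Lemma fcnt_le I kk p q : ok I kk p q -> (fcnt I p <= fcnt I q)%N.
Proof.
move=> hok; apply: sub_count => r /= /decP h; apply/decP; exact: below_step h hok.
Qed.

Lemma fcnt_lt I kk p q : ~ (exists n k pts, scyc I n k pts) ->
  ok I kk p q -> strict I kk p q -> (fcnt I p < fcnt I q)%N.
Proof.
move=> hno hok hst; apply: (@count_lt _ _ _ _ p).
- move=> r /= /decP h; apply/decP; exact: below_step h hok.
- by case/and4P: hok => hk ip _ _; exact: inc_ptsI ip.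
- by rewrite /=; apply/decP; exact: (below_one hok hst).
- by rewrite /=; apply/negP => /decP; apply: no_self.
Qed.

Lemma InE (T : eqType) (x : T) s : Stdlib.Lists.List.In x s <-> x \in s.
Proof.
elim: s => [|y s IH] //=; rewrite inE; split.
  by case=> [->|/IH ->]; rewrite ?eqxx ?orbT.
by case/orP => [/eqP ->|/IH]; [left|right].
Qed.

Local Open Scope ring_scope.

Lemma complete I : (forall c, c \in I -> c.1.1 != c.2) ->
  ~ (exists n k pts, scyc I n k pts) -> satisfiable I.
Proof.
move=> hnl hno.
pose F p : rat := (fcnt I p)%:R.
pose a v : Defs.interval := if v \in [seq p.1 | p <- ptsI I] then (F (v, false), F (v, true)) else (0, 1).
have okF : forall kk p q, ok I kk p q -> F p <= F q.
  by move=> kk p q h; rewrite /F ler_nat; apply: fcnt_le h.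
have ltF : forall kk p q, ok I kk p q -> strict I kk p q -> F p < F q.
  by move=> kk p q h hs; rewrite /F ltr_nat; apply: fcnt_lt h hs.
exists a; split.
  move=> v; rewrite /a /is_interval; case: ifP => [/mapP [p hp ev]|_]; last by rewrite /= ltr01.
  have [kk hk hi] := mem_ptsI hp; rewrite ev /=.
  have hok : ok I kk (p.1, false) (p.1, true) by rewrite /ok hk !hi /=; apply: ltnW; apply: val_lt.
  exact: ltF hok (val_lt _ _).
move=> c /InE hc.
have [kk [hk ec]] : exists kk, (kk < size I)%N /\ cst I kk = c.
  by exists (index c I); rewrite index_mem /cst nth_index.
case: c hc hnl ec => [[x R] y] hc hnl ec /=.
have nxy : x != y := hnl _ hc.
have ix : forall b, inc (cst I kk) (x, b) by move=> b; rewrite ec /inc /= eqxx.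
have iy : forall b, inc (cst I kk) (y, b) by move=> b; rewrite ec /inc /= eqxx orbT.
have ax : a x = (F (x, false), F (x, true)).
  rewrite /a; have -> // : x \in [seq p.1 | p <- ptsI I].
  by apply/mapP; exists (x, false) => //; apply: inc_ptsI hk (ix false).
have ay : a y = (F (y, false), F (y, true)).
  rewrite /a; have -> // : y \in [seq p.1 | p <- ptsI I].
  by apply/mapP; exists (y, false) => //; apply: inc_ptsI hk (iy false).
rewrite ax ay.
pose P (s b : bool) : point := (if s then y else x, b).
have iP : forall s b, inc (cst I kk) (P s b) by move=> [] b; rewrite /P.
have vP : forall s b, cval (cst I kk) (P s b) = mval R s b.
  move=> s b; rewrite ec /cval /P /=; case: s; rewrite /= ?eqxx // eq_sym nxy // .
have pP : forall s b, pt (F (x, false)) (F (x, true)) (F (y, false)) (F (y, true)) s b = F (P s b).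
  by move=> [] [].
apply: (@complete_rel R) => s b s' b' h; rewrite !pP.
- apply: (okF kk); by rewrite /ok hk !iP !vP h.
- apply: (ltF kk); first by rewrite /ok hk !iP !vP ltnW.
  by rewrite /strict !vP.
Qed.

End MF.
Import MF.

Module MG.

Lemma mkseq_cons (T : Type) (f : nat -> T) m : mkseq f m.+1 = f 0%N :: mkseq (fun t => f t.+1) m.
Proof.
apply: (@eq_from_nth _ (f 0%N)); first by rewrite size_mkseq /= size_mkseq.
move=> i; rewrite size_mkseq => hi; rewrite nth_mkseq //.
by case: i hi => //= i hi; rewrite nth_mkseq.
Qed.

Lemma rot1_mkseq (T : Type) (f : nat -> T) n : f n = f 0%N ->
  rot 1 (mkseq f n) = mkseq (fun t => f t.+1) n.
Proof.
case: n => [|m] e; first by [].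
by rewrite mkseq_cons rot1_cons mkseqS e.
Qed.

Lemma mem_remove_nth (I : instance) (i j : nat) : (j < size I)%N -> j != i -> nth c0 I j \in remove_nth I i.
Proof.
move=> hj hji; rewrite /remove_nth mem_cat.
case: (ltngtP j i) => h.
- apply/orP; left; rewrite -(nth_take c0 h); apply: mem_nth; rewrite size_take.
  by case: ifP => _; [exact: h | exact: hj].
- apply/orP; right.
  have -> : nth c0 I j = nth c0 (drop i.+1 I) (j - i.+1) by rewrite nth_drop; congr nth; lia.
  apply: mem_nth; rewrite size_drop; move: hj; set m := size _; lia.
- by rewrite h eqxx in hji.
Qed.

Lemma mem_remove (I : instance) (i : nat) c : c \in I -> c != nth c0 I i -> c \in remove_nth I i.
Proof.
move=> hc hne.
have e : nth c0 I (index c I) = c by rewrite nth_index.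
rewrite -e; apply: mem_remove_nth; first by rewrite index_mem.
by apply/negP => /eqP ei; move: hne; rewrite -ei e eqxx.
Qed.

End MG.
Import MG.

Theorem mainTheorem4 (I : instance) :
  minimal_unsat I -> is_cycle (primal_edges I).
Proof.
move=> [hun hmin].
case: (classic (exists c, c \in I /\ c.1.1 == c.2)) => [[c [hc hl]]|hnl].
  case: c hc hl => [[x R] y] hc /= /eqP exy; subst y.
  have hi0 : (index (x, R, x) I < size I)%N by rewrite index_mem.
  have ei0 : nth c0 I (index (x, R, x) I) = (x, R, x) by rewrite nth_index.
  case: (eqVneq R Req) => [eR|nR].
    subst R; exfalso; apply: hun.
    have [a [ha hs]] := hmin _ hi0.
    exists a; split => // c /InE hc'.
    case: (eqVneq c (x, Req, x)) => [->|ne]; first by rewrite /= eqxx.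
    apply: hs; apply/InE; apply: mem_remove => //; by rewrite ei0.
  have hs1 : size I = 1%N.
    case: (ltnP 1 (size I)) => h; last by lia.
    exfalso.
    set j := if index (x, R, x) I == 0%N then 1%N else 0%N.
    have hj : (j < size I)%N by move: h; rewrite /j; set m := size _; case: ifP => _; lia.
    have [a [ha hs]] := hmin _ hj.
    have : Stdlib.Lists.List.In (x, R, x) (remove_nth I j).
      apply/InE; rewrite -ei0; apply: mem_remove_nth => //.
      rewrite /j; set t := index _ _; case: (eqVneq t 0%N) => [->|ne] //; by rewrite (negbTE ne) eq_sym.
    move/hs => /= hh; by move: nR; rewrite (holds_loop hh (ha x)) eqxx.
  have -> : I = [:: (x, R, x)].
    case: I hc hs1 {hun hmin hi0 ei0} => [|c [|]] //= hc _.
    by move: hc; rewrite inE => /eqP ->.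
  by exists [:: x]; rewrite /primal_edges /= perm_refl.
have hnl' : forall c, c \in I -> c.1.1 != c.2.
  by move=> c hc; apply/negP => h; apply: hnl; exists c.
have [n [k [pts hc]]] : exists n k pts, scyc I n k pts.
  apply: NNPP => h; apply: hun; exact: complete hnl' h.
have {n k pts hc} [n [k [pts [hc hd]]]] := distinct_cyc hc.
have [n2 hedge hkd hkl] := cyc_struct hc hd.
have cover : forall i, (i < size I)%N -> exists2 t, (t < n)%N & k t = i.
  move=> i hi; apply: NNPP => hno.
  have [a [ha hs]] := hmin _ hi.
  have hh : forall s, (s < n)%N -> holds0 (cst I (k s)).1.2 (a (cst I (k s)).1.1) (a (cst I (k s)).2).
    move=> s hsn; apply: hs; apply/InE; apply: mem_remove_nth; first exact: hkl.
    by apply/eqP => e; apply: hno; exists s.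
  have := sound_walk ha hh hc.1; rewrite hc.2; by rewrite ltxx.
have hinj : forall s t, (s < n)%N -> (t < n)%N -> k s = k t -> s = t.
  move=> s t hs ht e; case: (ltngtP s t) => h //.
    by move: (hkd s t h ht); rewrite e eqxx.
  by move: (hkd t s h hs); rewrite e eqxx.
have hvinj : forall s t, (s < n)%N -> (t < n)%N -> (pts s).1 = (pts t).1 -> s = t.
  move=> s t hs ht e; case: (ltngtP s t) => h //.
    by move: (hd s t h ht); rewrite e eqxx.
  by move: (hd t s h hs); rewrite e eqxx.
set E := fun kk => uedge (cst I kk).1.1 (cst I kk).2.
have eP : primal_edges I = map E (iota 0 (size I)).
  rewrite /primal_edges -{1}(mkseq_nth c0 I) /mkseq -map_comp; by apply: eq_map.
exists (mkseq (fun t => (pts t).1) n); split.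
- by rewrite size_mkseq; lia.
- apply/mkseq_uniqP => s t; rewrite !inE /= => hs ht; exact: hvinj.
- rewrite rot1_mkseq; last by rewrite hc.2.
  have -> : [seq uedge p.1 p.2 | p <- zip (mkseq (fun t => (pts t).1) n) (mkseq (fun t => (pts t.+1).1) n)]
      = map E (mkseq k n).
    apply: (@eq_from_nth _ (0, 0)%N); first by rewrite !(size_map, size_zip, size_mkseq, size_iota, minnn).
    move=> t; rewrite !(size_map, size_zip, size_mkseq, size_iota, minnn) => ht.
    rewrite (nth_map (0, 0)%N) ?size_zip ?size_mkseq ?minnn //.
    rewrite (nth_map 0%N) ?size_mkseq // nth_zip ?size_mkseq // !nth_mkseq //=.
    by rewrite hedge.
  rewrite eP; apply: perm_map; apply: uniq_perm.
  + exact: iota_uniq.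
  + apply/mkseq_uniqP => s t; rewrite !inE /= => hs ht; exact: hinj.
  + move=> i; rewrite mem_iota add0n /=; apply/idP/idP.
      move=> hi; have [t ht <-] := cover i hi.
      by apply/mapP; exists t; rewrite // mem_iota.
    by case/mapP => t; rewrite mem_iota add0n /= => ht ->; apply: hkl.
Qed.
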